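(* Let $\mathcal{H}$ be a real Hilbert space, suppose $B\colon \mathcal{H}\to\mathcal{H}$ is monotone and $\rho\geq 0$. Then the operator $B':=B-\rho I$ is $L'$-Lipschitz, where $L'=L+\rho$ if $B$ is $L$-Lipschitz; $L'=L-\rho$ if $B$ is $1/L$-cocoercive and $\rho\leq\frac{L}{2}$; and $L'=\rho$ if $B$ is $1/L$-cocoercive and $\rho>\frac{L}{2}$.
   Context: $B$ is $1/L$-cocoercive if $\langle x-y,B(x)-B(y)\rangle\geq\frac1L\|B(x)-B(y)\|^2$ for all $x,y\in\mathcal{H}$. $I$ is the identity operator. *)

(* Defs.v *)
(* A real Hilbert space is modelled as an R-vector space
   (lmodType R, R : realType) equipped with an inner product whose induced
   norm is complete. *)
From mathcomp Require Import all_boot all_order all_algebra.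
From mathcomp Require Import reals.
Set Implicit Arguments. Unset Strict Implicit. Unset Printing Implicit Defensive.
Import Order.TTheory GRing.Theory Num.Theory.
Local Open Scope ring_scope.

Section Hilbert.
Variables (R : realType) (V : lmodType R).

Record is_inner_product (ip : V -> V -> R) : Prop := {
  ip_sym : forall x y, ip x y = ip y x;
  ip_linear : forall (a : R) x y z, ip (a *: x + y) z = a * ip x z + ip y z;
  ip_ge0 : forall x, 0 <= ip x x;
  ip_eq0 : forall x, ip x x = 0 -> x = 0 }.

Definition ipnorm (ip : V -> V -> R) (x : V) : R := Num.sqrt (ip x x).

Definition ip_complete (ip : V -> V -> R) : Prop :=
  forall u : nat -> V,
    (forall e : R, 0 < e -> exists N : nat, forall m n : nat,
        (N <= m)%N -> (N <= n)%N -> ipnorm ip (u m - u n) < e) ->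
    exists l : V, forall e : R, 0 < e -> exists N : nat, forall n : nat,
        (N <= n)%N -> ipnorm ip (u n - l) < e.

Definition is_real_hilbert (ip : V -> V -> R) : Prop :=
  is_inner_product ip /\ ip_complete ip.

Definition monotone_op (ip : V -> V -> R) (B : V -> V) : Prop :=
  forall x y, 0 <= ip (x - y) (B x - B y).

Definition lipschitz_op (ip : V -> V -> R) (B : V -> V) (L : R) : Prop :=
  forall x y, ipnorm ip (B x - B y) <= L * ipnorm ip (x - y).

Definition cocoercive_op (ip : V -> V -> R) (B : V -> V) (L : R) : Prop :=
  forall x y, ip (x - y) (B x - B y) >= L^-1 * ipnorm ip (B x - B y) ^+ 2.

End Hilbert.

(* Main.v *)
Require Import Defs.
From mathcomp Require Import all_boot all_order all_algebra.
From mathcomp Require Import reals.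
From mathcomp Require Import ring lra.
Import Order.TTheory GRing.Theory Num.Theory.
Local Open Scope ring_scope.

Lemma ip_expand (R : realType) (V : lmodType R) (ip : V -> V -> R)
  (hI : is_inner_product ip) (d u : V) (c : R) :
  ip (d - c *: u) (d - c *: u) = ip d d - 2 * c * ip u d + c ^+ 2 * ip u u.
Proof.
have e : d - c *: u = (- c) *: u + d by rewrite addrC scaleNr.
rewrite e (ip_linear hI) (ip_sym hI) (ip_linear hI) (ip_sym hI u d).
rewrite [ip d ((-c) *: u + d)](ip_sym hI) (ip_linear hI) (ip_sym hI u d).
ring.
Qed.

Lemma diffB (R : realType) (V : lmodType R) (B : V -> V) (rho : R) x y :
  (B x - rho *: x) - (B y - rho *: y) = (B x - B y) - rho *: (x - y).
Proof. by rewrite scalerBr opprD opprK opprB !addrA (addrAC (B x)) addrAC. Qed.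

Lemma sqrt_le (R : realType) (X K sn : R) : 0 <= sn -> 0 <= K * sn ->
  X <= K ^+ 2 * sn ^+ 2 -> Num.sqrt X <= K * sn.
Proof.
move=> hn hK hX.
rewrite -(ger0_norm hK) -sqrtr_sqr ler_sqrt; last by rewrite exprn_ge0.
by rewrite exprMn.
Qed.

Theorem lemma4p1 (R : realType) (V : lmodType R) (ip : V -> V -> R)
  (hH : is_real_hilbert ip) (B : V -> V) (hB : monotone_op ip B)
  (rho : R) (hrho : 0 <= rho) (L : R) :
  let B' := fun x : V => B x - rho *: x in
  (lipschitz_op ip B L -> lipschitz_op ip B' (L + rho)) /\
  (0 < L -> cocoercive_op ip B L -> rho <= L / 2 -> lipschitz_op ip B' (L - rho)) /\
  (0 < L -> cocoercive_op ip B L -> L / 2 < rho -> lipschitz_op ip B' rho).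
Proof.
case: hH => hI _ B'.
have key : forall x y, let d := B x - B y in let u := x - y in
  let sa := Num.sqrt (ip d d) in let sn := Num.sqrt (ip u u) in
  [/\ ipnorm ip (B' x - B' y) = Num.sqrt (sa ^+ 2 - 2 * rho * ip u d + rho ^+ 2 * sn ^+ 2),
      ip u u = sn ^+ 2, ip d d = sa ^+ 2, 0 <= sa /\ 0 <= sn &
      (0 <= ip u d /\ forall c, 0 <= sa ^+ 2 - 2 * c * ip u d + c ^+ 2 * sn ^+ 2)].
  move=> x y d u sa sn.
  have ed : ip d d = sa ^+ 2 by rewrite sqr_sqrtr // (ip_ge0 hI).
  have eu : ip u u = sn ^+ 2 by rewrite sqr_sqrtr // (ip_ge0 hI).
  split => //; first by rewrite /ipnorm /B' diffB ip_expand // -ed -eu.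
  - split; exact: sqrtr_ge0.
  split; first exact: hB.
  by move=> c; rewrite -ed -eu -ip_expand //; exact: (ip_ge0 hI).
split; [|split].
- move=> hL x y.
  have [-> eu ed [ha hn] [hp hc]] := key x y.
  have := hL x y; rewrite /ipnorm ed eu !sqrtr_sqr !ger0_norm // => h.
  have hLn : 0 <= L * Num.sqrt (ip (x - y) (x - y)) by exact: le_trans h.
  rewrite /ipnorm; apply: sqrt_le; first exact: sqrtr_ge0.
    nra.
  set sa := Num.sqrt _ in h ha hc *; set sn := Num.sqrt _ in h hn hLn hc *.
  have h1 : sa ^+ 2 <= L ^+ 2 * sn ^+ 2.
    have : 0 <= (L * sn - sa) * (L * sn + sa).
      by apply: mulr_ge0; [rewrite subr_ge0 | apply: addr_ge0].
    nra.
  have h2 : 0 <= rho * (L * sn) * sn by apply: mulr_ge0 => //; apply: mulr_ge0.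
  nra.
- move=> L0 hC hr x y.
  have [-> eu ed [ha hn] [hp hc]] := key x y.
  have := hC x y; rewrite /ipnorm ed sqrtr_sqr ger0_norm // => h.
  have h' : Num.sqrt (ip (B x - B y) (B x - B y)) ^+ 2 <= L * ip (x - y) (B x - B y).
    have := ler_wpM2l (ltW L0) h; rewrite mulrA mulfV ?mul1r //; exact: lt0r_neq0.
  have := hc L => hcL.
  rewrite /ipnorm; apply: sqrt_le; first exact: sqrtr_ge0.
    nra.
  nra.
- move=> L0 hC hr x y.
  have [-> eu ed [ha hn] [hp hc]] := key x y.
  have := hC x y; rewrite /ipnorm ed sqrtr_sqr ger0_norm // => h.
  have h' : Num.sqrt (ip (B x - B y) (B x - B y)) ^+ 2 <= L * ip (x - y) (B x - B y).
    have := ler_wpM2l (ltW L0) h; rewrite mulrA mulfV ?mul1r //; exact: lt0r_neq0.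
  rewrite /ipnorm; apply: sqrt_le; first exact: sqrtr_ge0.
    nra.
  nra.
Qed.
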